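(* Let $M>0$, $\Delta>0$, $\theta\ge0$, and let $P\in\mathcal P(\Delta,\theta,M)$ with $u=dP/dP_0-1$. Define $\eta^2_\varrho(P,P_0)=\sum_{k\ge1}\frac{\lambda_k}{\lambda_k+\varrho^2}\big[\mathbb E_P\varphi_k(X)\big]^2$. (a) If $\theta=0$ and $0<\varrho\le\sqrt{\Delta/(2M^2)}$, then $\eta^2_\varrho(P,P_0)\ge\frac12\|u\|^2_{L_2(P_0)}\ge\frac12\Delta$. (b) If $\theta>0$ and $0<\varrho\le\frac{1}{2\sqrt2}(2M)^{-\theta}\Delta^{\frac{1+\theta}{2}}$, then $\eta^2_\varrho(P,P_0)\ge\frac14\|u\|^2_{L_2(P_0)}\ge\frac14\Delta$.
   Context: $P_0$ is a probability measure on $(\mathcal X,\mathcal B)$ and $K$ a kernel with Mercer decomposition $K(x,x')=\sum_{k\ge1}\lambda_k\varphi_k(x)\varphi_k(x')$, $\lambda_1>\lambda_2>\cdots>0$, where $\{\varphi_k\}$ is an orthonormal basis of the $P_0$-mean-zero functions in $L_2(P_0)$. $\mathcal H(K)$ is the RKHS of $K$ with $\|f\|_K^2=\sum_k\lambda_k^{-1}\langle f,\varphi_k\rangle_{L_2(P_0)}^2$. $\mathcal F(\theta;M)$ ($\theta>0$) is the set of $f\in L_2(P_0)$ such that for every $R>0$ there is $f_R\in\mathcal H(K)$ with $\|f_R\|_K\le R$ and $\|f-f_R\|_{L_2(P_0)}\le MR^{-1/\theta}$; $\mathcal F(0;M)=\{f\in\mathcal H(K):\|f\|_K\le M\}$.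 $\mathcal P(\Delta,\theta,M)$ is the set of probability measures $P\ll P_0$ with $u=dP/dP_0-1\in\mathcal F(\theta;M)$ and $\|u\|^2_{L_2(P_0)}\ge\Delta$. Note $\mathbb E_P\varphi_k(X)=\langle u,\varphi_k\rangle_{L_2(P_0)}$. *)

(* Defs.v *)
From Stdlib Require Import Reals.
Open Scope R_scope.

(* Coefficient model of L2_0(P0) via the orthonormal basis (phi_k):
   a function f in the closed span is identified with its coefficient
   sequence k |-> <f, phi_k>_{L2(P0)}  (index k = 0 here is phi_1 of the paper).
   By Parseval, ||f||^2_{L2(P0)} = sum_k <f,phi_k>^2. *)

Definition sqsum (a : nat -> R) (s : R) : Prop :=
  infinite_sum (fun k => (a k) ^ 2) s.

Definition L2dist_le (a b : nat -> R) (c : R) : Prop :=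
  exists s, sqsum (fun k => a k - b k) s /\ sqrt s <= c.

(* f in H(K) and ||f||_K <= R, with ||f||_K^2 = sum_k lambda_k^{-1} <f,phi_k>^2 *)
Definition Knorm_le (lam : nat -> R) (b : nat -> R) (Rad : R) : Prop :=
  exists s, infinite_sum (fun k => (b k) ^ 2 / lam k) s /\ sqrt s <= Rad.

Definition F0 (lam : nat -> R) (M : R) (a : nat -> R) : Prop :=
  Knorm_le lam a M.

Definition Fpos (lam : nat -> R) (theta M : R) (a : nat -> R) : Prop :=
  (exists s, sqsum a s) /\
  forall Rad, 0 < Rad ->
    exists b, Knorm_le lam b Rad /\ L2dist_le a b (M * Rpower Rad (- / theta)).

Definition inF (lam : nat -> R) (theta M : R) (a : nat -> R) : Prop :=
  (theta = 0 -> F0 lam M a) /\ (0 < theta -> Fpos lam theta M a).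

(* P in P(Delta, theta, M), expressed through u = dP/dP0 - 1 *)
Definition inP (lam : nat -> R) (Delta theta M : R) (a : nat -> R) : Prop :=
  inF lam theta M a /\ exists s, sqsum a s /\ Delta <= s.

(* eta^2_rho(P,P0) = sum_k lambda_k/(lambda_k + rho^2) (E_P phi_k)^2, with E_P phi_k = a k *)
Definition eta_sq (lam : nat -> R) (rho : R) (a : nat -> R) (eta : R) : Prop :=
  infinite_sum (fun k => lam k / (lam k + rho ^ 2) * (a k) ^ 2) eta.

(* Main.v *)
Require Import Defs.
From Stdlib Require Import Reals Lra Psatz.
Open Scope R_scope.

Lemma sum_le (f g : nat -> R) l1 l2 :
  (forall n, f n <= g n) -> infinite_sum f l1 -> infinite_sum g l2 -> l1 <= l2.
Proof.
  intros H H1 H2. apply (@Rle_cv_lim (sum_f_R0 f) (sum_f_R0 g)); [|exact H1|exact H2].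
  intro n; apply sum_Rle; auto.
Qed.

Lemma cv_const (c : R) : Un_cv (fun _ => c) c.
Proof. intros e He; exists 0%nat; intros; unfold R_dist; rewrite Rminus_diag, Rabs_R0; lra. Qed.

Lemma sum_lin (f g : nat -> R) x y l1 l2 :
  infinite_sum f l1 -> infinite_sum g l2 ->
  infinite_sum (fun k => x * f k + y * g k) (x * l1 + y * l2).
Proof.
  intros H1 H2.
  assert (E : forall n, sum_f_R0 (fun k => x * f k + y * g k) n
               = x * sum_f_R0 f n + y * sum_f_R0 g n).
  { induction n; simpl; [ring| rewrite IHn; ring]. }
  intros e He.
  destruct (CV_plus _ _ _ _ (CV_mult _ _ _ _ (cv_const x) H1)
                          (CV_mult _ _ _ _ (cv_const y) H2) e He) as [N HN].
  exists N; intros n Hn; rewrite E; apply HN; auto.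
Qed.

Lemma le_of_sqrt D c : 0 <= c -> sqrt D <= c -> D <= c ^ 2.
Proof.
  intros Hc H. destruct (Rle_lt_dec 0 D) as [HD|HD].
  - rewrite <- (sqrt_sqrt D HD). pose proof (sqrt_pos D). nra.
  - nra.
Qed.

Lemma eta_exists lam rho a s : (forall k, 0 < lam k) -> sqsum a s ->
  exists eta, eta_sq lam rho a eta.
Proof.
  intros Hl Hs.
  destruct (Rseries_CV_comp (fun k => lam k / (lam k + rho ^ 2) * a k ^ 2) (fun k => a k ^ 2))
    as [eta He].
  - intro n. pose proof (Hl n). pose proof (pow2_ge_0 rho). pose proof (pow2_ge_0 (a n)).
    assert (0 <= lam n / (lam n + rho ^ 2) <= 1).
    { split. apply Rle_mult_inv_pos; lra.
      apply Rmult_le_reg_r with (lam n + rho ^ 2); [lra|].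
      unfold Rdiv; rewrite Rmult_assoc, Rinv_l; lra. }
    split; nra.
  - exists s; exact Hs.
  - exists eta; exact He.
Qed.

Lemma term_a l r2 a : 0 < l -> 0 <= r2 ->
  a ^ 2 - l / (l + r2) * a ^ 2 <= r2 * (a ^ 2 / l).
Proof.
  intros Hl Hr.
  assert (E : a ^ 2 - l / (l + r2) * a ^ 2 = r2 / (l + r2) * a ^ 2) by (field; lra).
  rewrite E. unfold Rdiv. rewrite <- !Rmult_assoc. rewrite (Rmult_comm r2 (a^2)).
  rewrite (Rmult_assoc r2 (/ (l+r2))), (Rmult_comm (/ (l+r2))), <- Rmult_assoc.
  rewrite (Rmult_comm r2 (a^2)).
  apply Rmult_le_compat_l. apply Rmult_le_pos; [apply pow2_ge_0|lra].
  apply Rinv_le_contravar; lra.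
Qed.

Lemma term_b l r2 a b : 0 < l -> 0 <= r2 ->
  a ^ 2 - l / (l + r2) * a ^ 2 <= 2 * (a - b) ^ 2 + 2 * r2 * (b ^ 2 / l).
Proof.
  intros Hl Hr.
  assert (E : a ^ 2 - l / (l + r2) * a ^ 2 = (r2 / (l + r2)) * a ^ 2) by (field; lra).
  rewrite E. set (w := r2 / (l + r2)).
  assert (Hw0 : 0 <= w) by (apply Rle_mult_inv_pos; lra).
  assert (Hw1 : w <= 1).
  { apply Rmult_le_reg_r with (l + r2); [lra|]. unfold w, Rdiv; rewrite Rmult_assoc, Rinv_l; lra. }
  assert (Hw2 : w * b ^ 2 <= r2 * (b ^ 2 / l)).
  { pose proof (term_a l r2 b Hl Hr).
    assert (b ^ 2 - l / (l + r2) * b ^ 2 = w * b ^ 2) by (unfold w; field; lra). lra. }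
  assert (a ^ 2 <= 2 * (a - b) ^ 2 + 2 * b ^ 2) by (pose proof (pow2_ge_0 (a - 2 * b)); simpl in *; lra).
  simpl in *.
  pose proof (pow2_ge_0 (a - b)).
  assert (w * a ^ 2 <= w * (2 * (a - b) ^ 2 + 2 * b ^ 2)) by (apply Rmult_le_compat_l; lra).
  assert (w * (a - b) ^ 2 <= 1 * (a - b) ^ 2) by (apply Rmult_le_compat_r; lra).
  lra.
Qed.

Theorem mainTheorem9
  (lam : nat -> R) (Hlam_pos : forall k, 0 < lam k)
  (Hlam_dec : forall k, lam (S k) < lam k)
  (M Delta theta : R) (HM : 0 < M) (HDelta : 0 < Delta) (Htheta : 0 <= theta)
  (a : nat -> R) (HP : inP lam Delta theta M a)
  (s : R) (Hs : sqsum a s) (rho : R) :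
  (theta = 0 -> 0 < rho <= sqrt (Delta / (2 * M ^ 2)) ->
     exists eta, eta_sq lam rho a eta /\ eta >= s / 2 /\ s / 2 >= Delta / 2) /\
  (0 < theta ->
     0 < rho <= / (2 * sqrt 2) * Rpower (2 * M) (- theta) * Rpower Delta ((1 + theta) / 2) ->
     exists eta, eta_sq lam rho a eta /\ eta >= s / 4 /\ s / 4 >= Delta / 4).
Proof.
  destruct HP as [[HF0 HFp] [s' [Hs' HDs]]].
  assert (s' = s) by (eapply uniqueness_sum; eauto). subst s'.
  destruct (eta_exists lam rho a s Hlam_pos Hs) as [eta Heta].
  assert (Hr2 : 0 <= rho ^ 2) by apply pow2_ge_0.
  split.
  - intros Ht [Hr Hrle]. destruct (HF0 Ht) as [t [Ht1 Ht2]].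
    assert (HtM : t <= M ^ 2) by (apply le_of_sqrt; lra).
    assert (Hrho2 : rho ^ 2 <= Delta / (2 * M ^ 2)).
    { assert (0 <= Delta / (2 * M ^ 2)) by (apply Rle_mult_inv_pos; nra).
      rewrite <- (pow2_sqrt (Delta / (2 * M ^ 2))) by lra.
      apply pow_incr; lra. }
    exists eta; split; auto.
    assert (Hd : s - eta <= rho ^ 2 * t).
    { replace (s - eta) with (1 * s + (-1) * eta) by ring.
      replace (rho ^ 2 * t) with (0 * 0 + rho ^ 2 * t) by ring.
      eapply sum_le; [| apply sum_lin; [exact Hs | exact Heta] | apply sum_lin; [ | exact Ht1]].
      + intro n. simpl. pose proof (term_a (lam n) (rho^2) (a n) (Hlam_pos n) Hr2). simpl in H. lra.
      + intros e He; exists 0%nat; intros; unfold R_dist.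
        replace (sum_f_R0 (fun _ => 0) n) with 0. rewrite Rminus_diag, Rabs_R0; lra.
        induction n; simpl; [ring|]. rewrite <- IHn; [ring|lia]. }
    assert (rho ^ 2 * t <= Delta / 2).
    { assert (0 <= t \/ t < 0) as [Htp|Htn] by lra.
      - apply Rle_trans with (Delta / (2 * M ^ 2) * M ^ 2).
        + apply Rmult_le_compat; lra.
        + right; field; lra.
      - nra. }
    lra.
  - intros Ht [Hr Hrle].
    destruct (HFp Ht) as [_ HR].
    set (sD := sqrt Delta).
    assert (HsD : 0 < sD) by (apply sqrt_lt_R0; lra).
    assert (HsD2 : sD * sD = Delta) by (apply sqrt_sqrt; lra).
    set (R := Rpower (2 * M / sD) theta).
    assert (HRp : 0 < R) by (unfold R, Rpower; apply exp_pos).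
    destruct (HR R HRp) as [b [[t [Ht1 Ht2]] [D [HD1 HD2]]]].
    assert (Hq : 0 < 2 * M / sD) by (apply Rdiv_lt_0_compat; lra).
    assert (Hc : M * Rpower R (- / theta) = sD / 2).
    { unfold R. rewrite Rpower_mult.
      replace (theta * - / theta) with (- (1)) by (field; lra).
      rewrite Rpower_Ropp, Rpower_1 by lra. field; lra. }
    rewrite Hc in HD2.
    assert (HDb : D <= Delta / 4).
    { apply le_of_sqrt in HD2; [|lra]. nra. }
    assert (HtR : t <= R ^ 2) by (apply le_of_sqrt; lra).
    assert (HrR : rho * R <= sD / (2 * sqrt 2)).
    { assert (K : / (2 * sqrt 2) * Rpower (2 * M) (- theta) * Rpower Delta ((1 + theta) / 2) * R
                  = sD / (2 * sqrt 2)).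
      { assert (L1 : ln Delta = ln sD + ln sD) by (rewrite <- HsD2; apply ln_mult; lra).
        assert (L2 : ln (2 * M / sD) = ln (2 * M) - ln sD).
        { unfold Rdiv; rewrite ln_mult, ln_Rinv; try apply Rinv_0_lt_compat; lra. }
        unfold R, Rpower. rewrite L1, L2.
        rewrite Rmult_assoc, Rmult_assoc, <- exp_plus, <- exp_plus.
        replace (- theta * ln (2 * M) + ((1 + theta) / 2 * (ln sD + ln sD) +
                 theta * (ln (2 * M) - ln sD))) with (ln sD) by field.
        rewrite exp_ln by lra. field. pose proof (sqrt_lt_R0 2). lra. }
      rewrite <- K. apply Rmult_le_compat_r; lra. }
    assert (HrR2 : (rho * R) ^ 2 <= Delta / 8).
    { pose proof (sqrt_lt_R0 2 ltac:(lra)) as H2.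
      assert (sqrt 2 * sqrt 2 = 2) by (apply sqrt_sqrt; lra).
      assert (0 <= rho * R) by nra.
      assert (H3 : (sD / (2 * sqrt 2)) ^ 2 = Delta / 8).
      { replace 8 with (4 * (sqrt 2 * sqrt 2)) by (rewrite H; ring). rewrite <- HsD2; field; lra. }
      rewrite <- H3. apply pow_incr. lra. }
    exists eta; split; auto.
    assert (Hd : s - eta <= 2 * D + (2 * rho ^ 2) * t).
    { replace (s - eta) with (1 * s + (-1) * eta) by ring.
      eapply sum_le; [| apply sum_lin; [exact Hs | exact Heta] | apply sum_lin; [exact HD1 | exact Ht1]].
      intro n. pose proof (term_b (lam n) (rho^2) (a n) (b n) (Hlam_pos n) Hr2). lra. }
    assert (2 * rho ^ 2 * t <= Delta / 4).
    { assert (0 <= t \/ t < 0) as [Htp|Htn] by lra.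
      - assert (rho ^ 2 * t <= (rho * R) ^ 2).
        { replace ((rho * R) ^ 2) with (rho ^ 2 * R ^ 2) by ring. apply Rmult_le_compat_l; lra. }
        lra.
      - nra. }
    lra.
Qed.
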